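(* Let $\Delta_0=\{x_0,\dots,x_d\}\subset\mathbb{R}^d$ be the vertex set of a regular simplex of edge length $1$ with centroid at the origin ($\sum_i x_i=0$), and let $\Delta'$ be the vertex set of another regular simplex of edge length $1$. If $\mathrm{dist}_H(\Delta_0,\Delta')<\tfrac12$, then there exist $\tau\in\mathbb{R}^d$ and $R\in O(d)$ such that the map $x\mapsto Rx+\tau$ maps $\Delta_0$ onto $\Delta'$ and \[ \mathrm{dist}_H(\Delta_0,\Delta')\;\ge\;\frac{1}{2\sqrt{d+1}}\bigl(\|R-I_d\|_2+\|\tau\|_2\bigr), \] where $\|\cdot\|_2$ on matrices is the operator (spectral) norm.
   Context: A regular simplex of edge length $1$ in $\mathbb{R}^d$ is given by its vertex set: $d+1$ points at pairwise distance exactly $1$. For nonempty compact $A,B\subset\mathbb{R}^d$, $\mathrm{dist}_H(A,B)=\max\{\sup_{a\in A}\inf_{b\in B}\|a-b\|_2,\ \sup_{b\in B}\inf_{a\in A}\|a-b\|_2\}$. *)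

(* Defs.v *)
From HB Require Import structures.
From mathcomp Require Import all_boot all_order all_algebra.
From mathcomp Require Import all_classical all_reals.
Set Implicit Arguments. Unset Strict Implicit. Unset Printing Implicit Defensive.
Import Order.TTheory GRing.Theory Num.Theory.
Local Open Scope ring_scope.
Local Open Scope classical_set_scope.

Definition enorm (R : realType) (d : nat) (v : 'cV[R]_d) : R :=
  Num.sqrt (\sum_(i < d) v i 0 ^+ 2).

Definition opnorm (R : realType) (d : nat) (M : 'M[R]_d) : R :=
  sup [set enorm (M *m v) | v in [set v : 'cV[R]_d | enorm v <= 1]].

Definition hausdorff (R : realType) (d : nat) (A B : set 'cV[R]_d) : R :=
  Num.max
    (sup [set inf [set enorm (a - b) | b in B] | a in A])
    (sup [set inf [set enorm (a - b) | a in A] | b in B]).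

Definition regular_unit_simplex (R : realType) (d : nat) (x : 'I_d.+1 -> 'cV[R]_d) : Prop :=
  forall i j : 'I_d.+1, i != j -> enorm (x i - x j) = 1.

Definition orthogonal_mx (R : realType) (d : nat) (M : 'M[R]_d) : Prop :=
  M^T *m M = 1%:M.

(* Main.v *)
Require Import Defs.
From HB Require Import structures.
From mathcomp Require Import all_boot all_order all_algebra.
From mathcomp Require Import all_classical all_reals.
From mathcomp Require Import ring lra.
Set Implicit Arguments. Unset Strict Implicit. Unset Printing Implicit Defensive.
Import Order.TTheory GRing.Theory Num.Theory.
Local Open Scope ring_scope.
Local Open Scope classical_set_scope.


Section Dot.
Variable R : realType.
Implicit Types (n : nat).

Definition dot n (u v : 'cV[R]_n) : R := \sum_(k < n) u k 0 * v k 0.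

Lemma dotC n (u v : 'cV[R]_n) : dot u v = dot v u.
Proof. by apply: eq_bigr => k _; rewrite mulrC. Qed.

Lemma dotDr n (u v w : 'cV[R]_n) : dot u (v + w) = dot u v + dot u w.
Proof. by rewrite /dot -big_split; apply: eq_bigr => k _; rewrite mxE mulrDr. Qed.

Lemma dotDl n (u v w : 'cV[R]_n) : dot (v + w) u = dot v u + dot w u.
Proof. by rewrite dotC dotDr !(dotC u). Qed.

Lemma dotZr n a (u v : 'cV[R]_n) : dot u (a *: v) = a * dot u v.
Proof. by rewrite /dot mulr_sumr; apply: eq_bigr => k _; rewrite mxE mulrCA. Qed.

Lemma dotZl n a (u v : 'cV[R]_n) : dot (a *: v) u = a * dot v u.
Proof. by rewrite dotC dotZr dotC. Qed.

Lemma dotNr n (u v : 'cV[R]_n) : dot u (- v) = - dot u v.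
Proof. by rewrite -scaleN1r dotZr mulN1r. Qed.

Lemma dotNl n (u v : 'cV[R]_n) : dot (- v) u = - dot v u.
Proof. by rewrite dotC dotNr dotC. Qed.

Lemma dotBr n (u v w : 'cV[R]_n) : dot u (v - w) = dot u v - dot u w.
Proof. by rewrite dotDr dotNr. Qed.

Lemma dotBl n (u v w : 'cV[R]_n) : dot (v - w) u = dot v u - dot w u.
Proof. by rewrite dotDl dotNl. Qed.

Lemma dot0r n (u : 'cV[R]_n) : dot u 0 = 0.
Proof. by rewrite /dot big1 // => k _; rewrite mxE mulr0. Qed.

Lemma dot0l n (u : 'cV[R]_n) : dot 0 u = 0.
Proof. by rewrite dotC dot0r. Qed.

Lemma dot_sumr n I (r : seq I) (P : pred I) (u : 'cV[R]_n) (F : I -> 'cV[R]_n) :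
  dot u (\sum_(i <- r | P i) F i) = \sum_(i <- r | P i) dot u (F i).
Proof.
elim/big_rec2: _ => [|i y1 y2 _ <-]; first exact: dot0r.
by rewrite dotDr.
Qed.

Lemma dot_suml n I (r : seq I) (P : pred I) (u : 'cV[R]_n) (F : I -> 'cV[R]_n) :
  dot (\sum_(i <- r | P i) F i) u = \sum_(i <- r | P i) dot (F i) u.
Proof. by rewrite dotC dot_sumr; apply: eq_bigr => i _; rewrite dotC. Qed.

Lemma dot_ge0 n (u : 'cV[R]_n) : 0 <= dot u u.
Proof. by apply: sumr_ge0 => k _; rewrite -expr2 sqr_ge0. Qed.

Lemma enormE n (u : 'cV[R]_n) : enorm u = Num.sqrt (dot u u).
Proof. by rewrite /enorm /dot; congr Num.sqrt; apply: eq_bigr => k _; rewrite expr2. Qed.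

Lemma enorm_ge0 n (u : 'cV[R]_n) : 0 <= enorm u.
Proof. exact: sqrtr_ge0. Qed.

Lemma enorm_sq n (u : 'cV[R]_n) : enorm u ^+ 2 = dot u u.
Proof. by rewrite enormE sqr_sqrtr // dot_ge0. Qed.

Lemma enorm0 n : enorm (0 : 'cV[R]_n) = 0.
Proof. by rewrite enormE dot0r sqrtr0. Qed.

Lemma dot_eq0 n (u : 'cV[R]_n) : dot u u = 0 -> u = 0.
Proof.
move=> /eqP; rewrite psumr_eq0; last by move=> k _; rewrite -expr2 sqr_ge0.
move=> /allP H; apply/matrixP => k j; rewrite (ord1 j) mxE.
by have := H k (mem_index_enum k); rewrite /= -expr2 sqrf_eq0 => /eqP.
Qed.

Lemma CS n (u v : 'cV[R]_n) : dot u v ^+ 2 <= dot u u * dot v v.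
Proof.
have [v0|vn0] := eqVneq (dot v v) 0.
  by rewrite (dot_eq0 v0) dot0r dot0l expr0n /= mulr0.
have vp : 0 < dot v v by rewrite lt_neqAle eq_sym vn0 dot_ge0.
set t := dot u v / dot v v.
have := dot_ge0 (u - t *: v).
rewrite !dotBl !dotBr !dotZl !dotZr (dotC v u) => H.
have : 0 <= dot u u - t * dot u v - (t * dot u v - t * (t * dot v v)) by [].
rewrite /t => H2.
have E : dot u u - dot u v / dot v v * dot u v -
       (dot u v / dot v v * dot u v - dot u v / dot v v * (dot u v / dot v v * dot v v))
       = (dot u u * dot v v - dot u v ^+ 2) / dot v v.
  by field; rewrite vn0.
rewrite E in H2; rewrite -subr_ge0.
by rewrite pmulr_lge0 ?invr_gt0 // in H2.
Qed.

Lemma dot_le n (u v : 'cV[R]_n) : dot u v <= enorm u * enorm v.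
Proof.
rewrite !enormE -sqrtrM ?dot_ge0 //.
have := CS u v => H.
apply: le_trans (ler_norm _) _.
by rewrite -sqrtr_sqr ler_wsqrtr.
Qed.

Lemma enormD n (u v : 'cV[R]_n) : enorm (u + v) <= enorm u + enorm v.
Proof.
rewrite -(ler_pXn2r (n:=2)) // ?nnegrE ?addr_ge0 ?enorm_ge0 //.
rewrite enorm_sq dotDl !dotDr (dotC v u) sqrrD !enorm_sq.
have := dot_le u v; lra.
Qed.

Lemma enormZ n a (u : 'cV[R]_n) : enorm (a *: u) = `|a| * enorm u.
Proof.
by rewrite !enormE dotZl dotZr mulrA -expr2 sqrtrM ?sqr_ge0 // sqrtr_sqr.
Qed.

Lemma enormN n (u : 'cV[R]_n) : enorm (- u) = enorm u.
Proof. by rewrite -scaleN1r enormZ normrN1 mul1r. Qed.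

Lemma enormB n (u v : 'cV[R]_n) : enorm (u - v) <= enorm u + enorm v.
Proof. by rewrite -(enormN v) enormD. Qed.

Lemma enorm_sum n I (r : seq I) (P : pred I) (F : I -> 'cV[R]_n) :
  enorm (\sum_(i <- r | P i) F i) <= \sum_(i <- r | P i) enorm (F i).
Proof.
elim/big_rec2: _ => [|i y1 y2 _ H]; first by rewrite enorm0.
by apply: le_trans (enormD _ _) _; rewrite lerD2l.
Qed.

Lemma dot_mul n (A : 'M[R]_n) (u v : 'cV[R]_n) : dot u (A *m v) = dot (A^T *m u) v.
Proof.
rewrite /dot.
under eq_bigr do rewrite mxE mulr_sumr.
rewrite exchange_big /=; apply: eq_bigr => l _.
rewrite mxE mulr_suml; apply: eq_bigr => k _.
by rewrite mxE; ring.
Qed.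

Lemma mul_tr n (u v w : 'cV[R]_n) : u *m (v^T *m w) = dot v w *: u.
Proof.
apply/matrixP => k j; rewrite (ord1 j) !mxE big_ord1 !mxE mulrC; congr (_ * _).
by rewrite /dot; apply: eq_bigr => l _; rewrite !mxE.
Qed.

End Dot.

Section Gram.
Variable R : realType.

Lemma gram (d : nat) (w : 'I_d.+1 -> 'cV[R]_d) :
  regular_unit_simplex w -> \sum_i w i = 0 ->
  forall i j, dot (w i) (w j) = - 1 / (2 * d.+1%:R) + (i == j)%:R / 2.
Proof.
move=> Hw Hs.
set N : R := d.+1%:R.
have N0 : N != 0 by rewrite pnatr_eq0.
have N0' : (1 + d%:R : R) != 0 by rewrite addrC natr1 pnatr_eq0.
set a := fun i => dot (w i) (w i).
set S := \sum_i a i.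
have H1 : forall i j, dot (w i) (w j) = (a i + a j - 1) / 2 + (i == j)%:R / 2.
  move=> i j; case: (eqVneq i j) => [->|ij].
    by rewrite /a /=; field.
  have e1 : enorm (w i - w j) = 1 := Hw i j ij.
  have : dot (w i - w j) (w i - w j) = 1 by rewrite -enorm_sq e1 expr1n.
  rewrite !dotBl !dotBr (dotC (w j) (w i)) /= -/(a i) -/(a j) => e.
  rewrite /= mul0r addr0; lra.
have H2 : forall i, S / 2 + N * (a i - 1) / 2 + 1 / 2 = 0.
  move=> i; have : dot (w i) (\sum_j w j) = 0 by rewrite Hs dot0r.
  rewrite dot_sumr; under eq_bigr do rewrite H1.
  rewrite big_split /=.
  have -> : \sum_j (i == j)%:R / 2 = 1 / 2 :> R.
    rewrite (bigD1 i) //= eqxx big1 => [|j]; first by rewrite addr0.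
    by rewrite eq_sym => /negbTE ->; rewrite mul0r.
  have -> : \sum_j (a i + a j - 1) / 2 = \sum_j (a j / 2 + (a i - 1) / 2).
    by apply: eq_bigr => j _; field.
  rewrite big_split /= -mulr_suml sumr_const card_ord -mulr_natl -/S -/N.
  move=> e; lra.
have Ha : forall i, a i = (N - S - 1) / N.
  move=> i; have := H2 i => e.
  have e2 : N * a i = N - S - 1 by lra.
  by apply: (mulfI N0); rewrite e2; field.
have HS : S = (N - 1) / 2.
  have : S = N * ((N - S - 1) / N).
    rewrite {1}/S; under eq_bigr do rewrite Ha.
    by rewrite sumr_const card_ord -mulr_natl.
  have -> : N * ((N - S - 1) / N) = N - S - 1 by field.
  move=> e; lra.
move=> i0 j0; rewrite H1 !Ha HS; field => //.
Qed.

End Gram.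

Section Span.
Variable R : realType.

Lemma span_id (d : nat) (x : 'I_d.+1 -> 'cV[R]_d) (M : 'M[R]_d) :
  (forall i j, dot (x i) (x j) = - 1 / (2 * d.+1%:R) + (i == j)%:R / 2) ->
  (forall j, M *m x j = x j) -> M = 1%:M.
Proof.
move=> Hg hM.
have N0' : (1 + d%:R : R) != 0 by rewrite addrC natr1 pnatr_eq0.
pose X : 'M[R]_d := \matrix_(k, j) x (widen_ord (leqnSn d) j) k 0.
set c : R := - 1 / (2 * d.+1%:R).
have G : X^T *m X = 2^-1 *: 1%:M + c *: const_mx 1.
  apply/matrixP => i j; rewrite !mxE.
  transitivity (dot (x (widen_ord (leqnSn d) i)) (x (widen_ord (leqnSn d) j))).
    by apply: eq_bigr => k _; rewrite !mxE.
  rewrite Hg -[widen_ord _ i == _]/(i == j) /c.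
  case: (i == j) => /=; field => //.
  have J2 : (const_mx 1 : 'M[R]_d) *m (const_mx 1 : 'M[R]_d) = d%:R *: const_mx 1.
  apply/matrixP => i j; rewrite !mxE.
  under eq_bigr do rewrite !mxE mulr1.
  by rewrite sumr_const card_ord mulr1 -mulr_natl mulr1.
have XW : X^T *m (X *m (2 *: (1%:M + const_mx 1))) = 1%:M.
  rewrite mulmxA G -!scalemxAr mulmxDr !mulmxDl -!scalemxAl !mul1mx !mulmx1 J2.
  apply/matrixP => i j; rewrite !mxE /c.
  case: (i == j) => /=; field => //.
have [Ut _] := mulmx1_unit XW.
have UX : X \in unitmx by rewrite -unitmx_tr.
have MX : M *m X = X.
  apply/matrixP => k j; rewrite !mxE.
  have := congr1 (fun v : 'cV[R]_d => v k 0) (hM (widen_ord (leqnSn d) j)).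
  rewrite mxE => <-; apply: eq_bigr => l _; rewrite mxE //.
by rewrite -(mulmxK UX M) MX mulmxV.
Qed.

End Span.

Section SupInf.
Variable R : realType.

Lemma opnorm_le (d : nat) (M : 'M[R]_d) c :
  (forall v, enorm v <= 1 -> enorm (M *m v) <= c) -> opnorm M <= c.
Proof.
move=> H; apply: ge_sup.
  exists (enorm (M *m 0)); exists 0 => //=.
  by rewrite enorm0 ler01.
by move=> _ [v hv <-]; apply: H.
Qed.

Lemma opnorm_ge (d : nat) (M : 'M[R]_d) c v :
  (forall v, enorm v <= 1 -> enorm (M *m v) <= c) -> enorm v <= 1 ->
  enorm (M *m v) <= opnorm M.
Proof.
move=> H hv; apply: ub_le_sup; last by exists v.
by exists c => _ [w hw <-]; apply: H.
Qed.

Lemma enorm_diff (d : nat) (u a b : 'cV[R]_d) :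
  enorm (a - b) <= enorm (u - a) + enorm (u - b).
Proof.
have -> : a - b = - (u - a) + (u - b) by rewrite opprB addrA subrK.
by apply: le_trans (enormD _ _) _; rewrite enormN.
Qed.

Lemma haus_near (d : nat) (x y : 'I_d.+1 -> 'cV[R]_d) :
  regular_unit_simplex y -> hausdorff (range x) (range y) < 1 / 2 ->
  forall i, exists j, enorm (x i - y j) <= hausdorff (range x) (range y) /\
                      enorm (x i - y j) < 1 / 2.
Proof.
move=> Hy; set h := hausdorff _ _ => hh i.
have lb : forall a, has_lbound [set enorm (a - b) | b in range y].
  by move=> a; exists 0 => _ [b _ <-]; apply: enorm_ge0.
have elem : forall a j, [set enorm (a - b) | b in range y] (enorm (a - y j)).
  by move=> a j; exists (y j) => //; exists j.
have ubT : has_ubound [set inf [set enorm (a - b) | b in range y] | a in range x].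
  exists (\sum_k enorm (x k - y ord0)) => _ [a [k _ <-] <-].
  apply: le_trans (ge_inf (lb (x k)) (elem (x k) ord0)) _.
  rewrite (bigD1 k) //= lerDl; apply: sumr_ge0 => l _; exact: enorm_ge0.
have hle : inf [set enorm (x i - b) | b in range y] <= h.
  rewrite /h /hausdorff le_max; apply/orP; left.
  apply: ub_le_sup => //; exists (x i) => //; by exists i.
have [_ [bb [j _ <-] <-] hj] : exists2 z, [set enorm (x i - b) | b in range y] z & z < 1 / 2.
  apply: inf_lt; first by exists (enorm (x i - y ord0)); apply: elem.
  exact: le_lt_trans hle hh.
exists j; split => //.
apply: le_trans hle; apply: lb_le_inf; first by exists (enorm (x i - y j)); apply: elem.
move=> _ [b [j' _ <-] <-].
case: (eqVneq j j') => [<-|ne] //.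
have := enorm_diff (x i) (y j) (y j'); rewrite Hy //.
lra.
Qed.

End SupInf.

Section Final.
Variable R : realType.

Lemma fin_comb (s C opn t h : R) : 0 < s -> 0 <= h -> opn <= C * h -> t <= h ->
  C + 1 <= 2 * s -> 1 / (2 * s) * (opn + t) <= h.
Proof.
move=> hs hh ho ht hC.
have key : opn + t <= (2 * s) * h by nra.
have hs2 : 0 < 2 * s by lra.
rewrite -(ler_pM2l hs2) mulrA mul1r mulfV ?mul1r //; lra.
Qed.

Lemma enorm_cV0 (v : 'cV[R]_0) : enorm v = 0.
Proof. by rewrite /enorm big_ord0 sqrtr0. Qed.

Lemma final (d : nat) (Q : 'M[R]_d) (tau : 'cV[R]_d) h :
  0 <= h -> h < 1 / 2 -> orthogonal_mx Q ->
  (forall v, enorm v <= 1 -> enorm ((Q - 1%:M) *m v) <= Num.sqrt (2 * d.+1%:R) * h) ->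
  enorm tau <= h ->
  1 / (2 * Num.sqrt d.+1%:R) * (opnorm (Q - 1%:M) + enorm tau) <= h.
Proof.
case: d Q tau => [|[|d]] Q tau hh0 hh1 HQ Hb Ht.
- apply: (@fin_comb _ 0) => //.
  + by rewrite sqrtr_gt0 ltr0n.
  + by rewrite mul0r; apply: opnorm_le => v _; rewrite enorm_cV0.
  + by rewrite sqrtr1; lra.
- have s1 : 1 <= Num.sqrt (1.+1%:R : R).
    by rewrite -{1}sqrtr1 ler_wsqrtr // ler1n.
  apply: (@fin_comb _ 0) => //.
  + by rewrite sqrtr_gt0 ltr0n.
  + rewrite mul0r; apply: opnorm_le => v _.
    suff -> : Q - 1%:M = 0 by rewrite mul0mx enorm0.
    have q2 : Q 0 0 * Q 0 0 = 1.
      have := congr1 (fun M : 'M[R]_1 => M 0 0) HQ.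
      by rewrite /= !mxE big_ord1 !mxE.
    have [q1|qm1] : Q 0 0 = 1 \/ Q 0 0 = -1.
      have : (Q 0 0 - 1) * (Q 0 0 + 1) = 0 by rewrite mulrDr mulrBl q2; ring.
      by move/eqP; rewrite mulf_eq0 => /orP [/eqP e|/eqP e]; [left|right]; lra.
      by apply/matrixP => i j; rewrite (ord1 i) (ord1 j) !mxE q1 subrr.
    exfalso.
    have := Hb (const_mx 1).
    have -> : enorm (const_mx 1 : 'cV[R]_1) = 1.
      by rewrite /enorm big_ord1 mxE expr1n sqrtr1.
    have -> : enorm ((Q - 1%:M) *m const_mx 1) = 2.
      rewrite /enorm big_ord1 !mxE big_ord1 !mxE qm1 /=.
      have -> : (-1 - 1) * 1 = - 2 :> R by ring.
      by rewrite sqrrN sqrtr_sqr ger0_norm.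
    have -> : Num.sqrt (2 * 1.+1%:R) = 2 :> R.
      have -> : (2 * 1.+1%:R : R) = 2 ^+ 2 by rewrite expr2.
      by rewrite sqrtr_sqr ger0_norm.
    move=> /(_ (lexx _)); lra.
  + lra.
- set N : R := d.+3%:R.
  have N3 : 3 <= N by rewrite /N (ler_nat R 3).
  set s := Num.sqrt N.
  have s0 : 0 <= s by apply: sqrtr_ge0.
  have s2 : s ^+ 2 = N by rewrite sqr_sqrtr //; lra.
  set r := Num.sqrt (2 : R).
  have r0 : 0 <= r by apply: sqrtr_ge0.
  have r2 : r ^+ 2 = 2 by rewrite sqr_sqrtr.
  apply: (@fin_comb _ (r * s)) => //.
  + by rewrite sqrtr_gt0; lra.
  + apply: opnorm_le => v hv.
    by rewrite /s /r -sqrtrM //; apply: Hb.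
  + have rb : r <= 14143 / 10000 by nra.
    have sb : 1732 / 1000 <= s by nra.
    nra.
Qed.

End Final.

Section Main.
Variable R : realType.

Lemma outer_mul n k (a b : 'I_k -> 'cV[R]_n) v :
  (2 *: \sum_i (a i *m (b i)^T)) *m v = \sum_i (2 * dot (b i) v) *: a i.
Proof.
rewrite -scalemxAl mulmx_suml scaler_sumr; apply: eq_bigr => i _.
by rewrite -mulmxA mul_tr scalerA.
Qed.

Lemma outer_tr n k (a b : 'I_k -> 'cV[R]_n) :
  (2 *: \sum_i (a i *m (b i)^T))^T = 2 *: \sum_i (b i *m (a i)^T).
Proof.
rewrite linearZ /= linear_sum /=; congr (_ *: _); apply: eq_bigr => i _.
by rewrite trmx_mul trmxK.
Qed.

Lemma comb n k (w : 'I_k -> 'cV[R]_n) c j : \sum_i w i = 0 ->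
  \sum_i (2 * (c + (i == j)%:R / 2)) *: w i = w j.
Proof.
move=> Hs.
under eq_bigr do rewrite mulrDr scalerDl.
rewrite big_split /= -scaler_sumr Hs scaler0 add0r.
rewrite (bigD1 j) //= eqxx big1 => [|i /negbTE ->]; last by rewrite mul0r mulr0 scale0r.
by rewrite addr0 mul1r divff ?scale1r // pnatr_eq0.
Qed.

Lemma sum_abs_sq k (c : 'I_k -> R) :
  (\sum_i `|c i|) ^+ 2 <= k%:R * \sum_i c i ^+ 2.
Proof.
pose u : 'cV[R]_k := \col_i `|c i|.
pose w : 'cV[R]_k := const_mx 1.
have := CS u w.
have -> : dot u w = \sum_i `|c i| by apply: eq_bigr => i _; rewrite !mxE mulr1.
have -> : dot u u = \sum_i c i ^+ 2.
  by apply: eq_bigr => i _; rewrite !mxE -expr2 real_normK ?num_real.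
have -> : dot w w = k%:R.
  rewrite /dot; under eq_bigr do rewrite !mxE mulr1.
  by rewrite sumr_const card_ord.
by rewrite mulrC.
Qed.

End Main.

Unset Implicit Arguments.
Set Strict Implicit.
Lemma arith1 {R : realType} {a b c : R} : a < 1/2 -> b < 1/2 -> c <= a + b -> c = 1 -> False.
Proof. lra. Qed.

Theorem mainTheorem10 (R : realType) (d : nat)
    (x y : 'I_d.+1 -> 'cV[R]_d) :
  regular_unit_simplex x ->
  \sum_(i < d.+1) x i = 0 ->
  regular_unit_simplex y ->
  hausdorff (range x) (range y) < 1 / 2 ->
  exists (tau : 'cV[R]_d) (Q : 'M[R]_d),
    orthogonal_mx Q /\
    (fun v => Q *m v + tau) @` (range x) = range y /\
    hausdorff (range x) (range y) >=
      1 / (2 * Num.sqrt (d.+1)%:R) * (opnorm (Q - 1%:M) + enorm tau).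
Proof.
move=> Hx Hsx Hy Hh.
set h := hausdorff (range x) (range y).
have near := haus_near Hy Hh.
have [sg Hsg] := choice near.
have h0 : 0 <= h := le_trans (enorm_ge0 _) (Hsg ord0).1.
have eN : forall (a b : 'cV[R]_d), enorm (a - b) = enorm (b - a).
  by move=> a b; rewrite -opprB enormN.
have sg_inj : injective sg.
  move=> i k e; apply/eqP; apply: contraT => ne.
  have a1 : enorm (y (sg i) - x i) < 1/2 by rewrite eN; exact: (Hsg i).2.
  have a2 : enorm (y (sg i) - x k) < 1/2 by rewrite e eN; exact: (Hsg k).2.
  suff : False by [].
  have t1 := enorm_diff (y (sg i)) (x i) (x k).
  have t2 := Hx i k ne.
  exact: (arith1 a1 a2 t1 t2).
have [sgi Hsgi1 Hsgi2] := injF_bij sg_inj.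
pose y' := fun i => y (sg i).
have Hy' : regular_unit_simplex y'.
  by move=> i k ne; apply: Hy; rewrite (inj_eq sg_inj).
set N : R := d.+1%:R.
have N0 : N != 0 by rewrite pnatr_eq0.
have Npos : 0 < N by rewrite ltr0n.
pose tau := N^-1 *: \sum_i y' i.
pose z := fun i => y' i - tau.
have Hz : regular_unit_simplex z.
  move=> i k ne; rewrite /z opprB addrA subrK; exact: Hy'.
have Hsz : \sum_i z i = 0.
  rewrite /z sumrB sumr_const card_ord -scaler_nat /tau scalerA mulfV //.
  by rewrite scale1r subrr.
have Gx := gram Hx Hsx.
have Gz := gram Hz Hsz.
pose Q := 2 *: \sum_i (z i *m (x i)^T).
pose P := 2 *: \sum_i (x i *m (x i)^T).
have Qx : forall j, Q *m x j = z j.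
  move=> j; rewrite outer_mul; under eq_bigr do rewrite Gx.
  exact: comb.
have QtQ : Q^T *m Q = 1%:M.
  apply: (span_id Gx) => j; rewrite -mulmxA Qx outer_tr outer_mul.
  under eq_bigr do rewrite Gz.
  exact: comb.
have P1 : P = 1%:M.
  apply: (span_id Gx) => j; rewrite outer_mul; under eq_bigr do rewrite Gx.
  exact: comb.
have Pv : forall v, \sum_i (2 * dot (x i) v) *: x i = v.
  by move=> v; rewrite -outer_mul -/P P1 mul1mx.
exists tau, Q; split => //; split.
  apply/seteqP; split.
    move=> _ [_ [i _ <-] <-]; exists (sg i) => //.
    by rewrite Qx /z subrK.
  move=> _ [j _ <-]; exists (x (sgi j)); first by exists (sgi j).
  by rewrite Qx /z subrK /y' Hsgi2.
pose e := fun i => y' i - x i.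
have He : forall i, enorm (e i) <= h.
  by move=> i; rewrite /e eN; exact: (Hsg i).1.
have Ht : enorm tau <= h.
  have -> : tau = N^-1 *: \sum_i e i.
    by rewrite /tau /e sumrB Hsx subr0.
  rewrite enormZ ger0_norm; last by rewrite invr_ge0 ltW.
  have s1 : enorm (\sum_i e i) <= \sum_i enorm (e i) := enorm_sum _ _ _.
  have s2 : \sum_i enorm (e i) <= N * h.
    apply: le_trans (ler_sum _ (fun i _ => He i)) _.
    by rewrite sumr_const card_ord -mulr_natl.
  by rewrite -(ler_pM2l Npos) mulrA mulfV // mul1r; apply: le_trans s1 s2.
apply: final => //.
move=> v hv.
set c := fun i => dot (x i) v.
have E1 : (Q - 1%:M) *m v = \sum_i (2 * c i) *: e i.
  rewrite mulmxBl mul1mx outer_mul -{2}(Pv v) -sumrB.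
  under eq_bigr do rewrite -scalerBr /z.
  have -> : \sum_i (2 * dot (x i) v) *: (y' i - tau - x i)
          = \sum_i ((2 * c i) *: e i - (2 * c i) *: tau).
    by apply: eq_bigr => i _; rewrite -scalerBr /e /c addrAC.
  rewrite sumrB -scaler_suml.
  have -> : \sum_i 2 * c i = 0.
    by rewrite -mulr_sumr /c -dot_suml Hsx dot0l mulr0.
  by rewrite scale0r subr0.
have E2 : \sum_i c i ^+ 2 = dot v v / 2.
  have -> : dot v v = dot v (\sum_i (2 * dot (x i) v) *: x i) by rewrite Pv.
  rewrite dot_sumr [in RHS](eq_bigr (fun i => 2 * c i ^+ 2)); last first.
    move=> i _; rewrite dotZr (dotC v) -/(c i); ring.
  by rewrite -mulr_sumr; field.
set A := \sum_i `|c i|.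
have A0 : 0 <= A by apply: sumr_ge0 => i _; exact: normr_ge0.
have HA : A ^+ 2 <= N / 2.
  apply: le_trans (sum_abs_sq c) _; rewrite -/N E2.
  have : dot v v <= 1 by rewrite -enorm_sq -(expr1n _ 2) lerXn2r ?nnegrE ?enorm_ge0.
  nra.
have E3 : enorm ((Q - 1%:M) *m v) <= 2 * A * h.
  rewrite E1; apply: le_trans (enorm_sum _ _ _) _.
  rewrite /A mulr_sumr mulr_suml; apply: ler_sum => i _.
  rewrite enormZ normrM ger0_norm // ler_wpM2l //.
  by rewrite mulr_ge0 // normr_ge0.
apply: le_trans E3 _; rewrite ler_wpM2r //.
rewrite -(ger0_norm (_ : 0 <= 2 * A)); last by lra.
rewrite -sqrtr_sqr ler_wsqrtr //; nra.
Qed.
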